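(* Let $n\in\mathbb{N}$. Then the complete graph $K_n$ is an $\mathcal{N}$ position for Grim if and only if $n$ is even.
   Context: Grim is a two-player game on a finite simple undirected graph. Any isolated vertices of the starting graph are deleted before play begins. Players alternate moves; a move consists of selecting a vertex of the current graph and deleting it together with all its incident edges, after which every vertex that has become isolated is also deleted. The player who makes the last legal move wins (a player facing the empty graph has no move and loses). A graph is an $\mathcal{N}$ position if the player about to move has a winning strategy, and a $\mathcal{P}$ position otherwise. *)

(* Defs.v *)
From mathcomp Require Import all_boot.
Set Implicit Arguments. Unset Strict Implicit. Unset Printing Implicit Defensive.

(* Every graph reachable in Grim is the
   subgraph of the start graph induced on some vertex set S : {set T}
   (deleting vertices and isolated vertices never removes edges between
   surviving vertices). *)

Definition nonisolated (T : finType) (e : rel T) (S : {set T}) : {set T} :=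
  [set x in S | [exists y in S, e x y]].

(* With k >= #|S| this is the
   exact game value, since every move strictly decreases #|S|. *)
Fixpoint grim_win (T : finType) (e : rel T) (k : nat) (S : {set T}) : bool :=
  match k with
  | 0 => false
  | k'.+1 => [exists v in S, ~~ grim_win e k' (nonisolated e (S :\ v))]
  end.

Definition grim_N (T : finType) (e : rel T) : Prop :=
  grim_win e #|T| (nonisolated e [set: T]).

Definition complete_rel (n : nat) : rel 'I_n := fun x y => x != y.

(* Main.v *)
Require Import Defs.
From mathcomp Require Import all_boot.

Lemma noniso_K n (S : {set 'I_n}) :
  nonisolated (@complete_rel n) S = if 1 < #|S| then S else set0.
Proof.
apply/setP=> x; rewrite /nonisolated inE.
case: ifP => h.
  case xS: (x \in S) => //=.
  have: 0 < #|S :\ x| by move: h; rewrite (cardsD1 x S) xS.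
  rewrite card_gt0 => /set0Pn [y]; rewrite !inE => /andP [yx yS].
  by apply/existsP; exists y; rewrite yS /complete_rel eq_sym.
rewrite inE; apply/negbTE; apply/negP=> /andP [xS /existsP [y /andP [yS xy]]].
move/negbT: h => /negP; apply; apply/card_gt1P; exists x, y; by split.
Qed.

Lemma win_K n k (S : {set 'I_n}) : #|S| <= k -> #|S| != 1 ->
  grim_win (@complete_rel n) k S = (0 < #|S|) && ~~ odd #|S|.
Proof.
elim: k S => [|k IH] S hk h1 /=.
  by move: hk; rewrite leqn0 => /eqP ->.
case: (posnP #|S|) => [S0|Spos].
  apply/negbTE/existsP=> [[v /andP [vS _]]].
  by move: S0; rewrite (cardsD1 v S) vS.
rewrite /=.
have cD v : v \in S -> #|S :\ v| = #|S|.-1 by move=> vS; rewrite (cardsD1 v S) vS.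
apply/existsP/idP.
  move=> [v /andP [vS]]; rewrite noniso_K cD //.
  case: ifP => h.
    rewrite IH ?cD //; last by rewrite neq_ltn h orbT.
    2: by move: hk; case: #|S|.
    rewrite (ltn_trans _ h) //=.
    by case: #|S| Spos => // m _ /=; rewrite negbK.
  move=> _; move: h Spos h1; case: #|S| => [|[|[|m]]] //.
move=> ev.
have [v vS]: exists v, v \in S by apply/set0Pn; rewrite -card_gt0.
exists v; rewrite vS /= noniso_K cD //.
case: ifP => h.
  rewrite IH ?cD //; last by rewrite neq_ltn h orbT.
  2: by move: hk; case: #|S|.
  rewrite (ltn_trans _ h) //=.
  by move: ev; case: #|S| Spos => // m _ /=; rewrite negbK.
by case: k {IH hk} => //= k; apply/negP => /existsP [w]; rewrite inE.
Qed.

Theorem lemma3p1 (n : nat) (hn : 1 <= n) :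
  grim_N (@complete_rel n) <-> ~~ odd n.
Proof.
rewrite /grim_N noniso_K cardsT card_ord.
case: ifP => h.
  rewrite win_K ?cardsT ?card_ord // ?(ltn_trans _ h) //.
  by rewrite neq_ltn h orbT.
have -> : n = 1 by apply/eqP; rewrite eqn_leq hn andbT leqNgt h.
rewrite /=; split=> // /existsP [w]; by rewrite inE.
Qed.
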